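(* Let $\varepsilon>0$ and let $G$ be a graph on $n$ vertices such that no subgraph of $G$ with at least $n/2$ vertices is an $\varepsilon$-expander (i.e. $G$ is $(n/2,\varepsilon)$-bounded). Then $G$ has a $(2\varepsilon n/3,\,2/3)$-separator.
   Context: For a graph $G'=(V',E')$ and $U\subseteq V'$, $N(U)$ is the set of vertices of $V'\setminus U$ adjacent in $G'$ to some vertex of $U$; $G'$ is an $\varepsilon$-expander if $|N(U)|\ge\varepsilon|U|$ for all $U\subseteq V'$ with $|U|\le|V'|/2$. For a real $s\ge0$ and $\tfrac12\le\alpha<1$, a set $S\subseteq V$ is an $(s,\alpha)$-separator of $G=(V,E)$ if there are $A,B\subseteq V$ with $V=A\,\dot\cup\,B\,\dot\cup\,S$, $|S|\le s$, $|A|,|B|\le\alpha|V|$, and no edge of $G$ between $A$ and $B$. *)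

(* Defs.v *)
From mathcomp Require Import all_boot all_order all_algebra.
Set Implicit Arguments. Unset Strict Implicit. Unset Printing Implicit Defensive.
Import Order.TTheory GRing.Theory Num.Theory.
Local Open Scope ring_scope.

Definition simple_graph (T : finType) (e : rel T) : Prop :=
  symmetric e /\ irreflexive e.

Definition subgraph (T : finType) (e : rel T) (V' : {set T}) (e' : rel T) : Prop :=
  simple_graph e' /\ forall x y, e' x y -> [/\ e x y, x \in V' & y \in V'].

Definition nbhd (T : finType) (V' : {set T}) (e' : rel T) (U : {set T}) : {set T} :=
  [set y in V' :\: U | [exists x in U, e' x y]].

Definition expander (R : realFieldType) (eps : R) (T : finType)
    (V' : {set T}) (e' : rel T) : Prop :=
  forall U : {set T}, U \subset V' -> (2 * #|U| <= #|V'|)%N ->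
    eps * (#|U|%:R) <= (#|nbhd V' e' U|%:R).

Definition separator (R : realFieldType) (T : finType) (e : rel T)
    (s alpha : R) (S : {set T}) : Prop :=
  exists A B : {set T},
    [disjoint A & B] /\ [disjoint A & S] /\ [disjoint B & S] /\
    A :|: B :|: S = setT /\
    #|S|%:R <= s /\ #|A|%:R <= alpha * #|T|%:R /\ #|B|%:R <= alpha * #|T|%:R /\
    (forall x y, x \in A -> y \in B -> ~~ e x y).

(* Main.v *)
Require Import Defs.
From mathcomp Require Import all_boot all_order all_algebra.
From mathcomp Require Import zify ring lra.
From Stdlib Require Import Classical.
Import Order.TTheory GRing.Theory Num.Theory.
Local Open Scope ring_scope.

Section S.
Variables (R : realFieldType) (eps : R) (T : finType) (e : rel T).

Definition Inv (A B : {set T}) : Prop :=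
  [/\ [disjoint A & B], (forall x y, x \in A -> y \in B -> ~~ e x y),
     #|~: (A :|: B)|%:R <= eps * #|A|%:R & (3 * #|A| <= 2 * #|T|)%N].

Lemma inv_sep A B : 0 < eps -> Inv A B -> (3 * #|B| <= 2 * #|T|)%N ->
  exists S : {set T}, separator e (2 * eps * #|T|%:R / 3) (2 / 3) S.
Proof.
move=> he [dAB nE hS hA] hB; exists (~: (A :|: B)); exists A, B.
have hA' : 3 * (#|A|%:R : R) <= 2 * #|T|%:R.
  by have := hA; rewrite -(ler_nat R) !natrM.
have hB' : 3 * (#|B|%:R : R) <= 2 * #|T|%:R.
  by have := hB; rewrite -(ler_nat R) !natrM.
split; first done.
split; first by rewrite disjoints_subset setCK subsetUl.
split; first by rewrite disjoints_subset setCK subsetUr.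
split; first by rewrite setUCr.
split; first by nra.
split; first by lra.
split; first by lra.
done.
Qed.

Lemma main_ind (H : forall (V' : {set T}) (e' : rel T), subgraph e V' e' ->
     (#|T| <= 2 * #|V'|)%N -> ~ expander eps V' e') :
  0 < eps -> simple_graph e -> forall m A B, Inv A B -> (#|B| <= m)%N ->
  exists S : {set T}, separator e (2 * eps * #|T|%:R / 3) (2 / 3) S.
Proof.
move=> he [sym irr]; elim=> [|m IH] A B inv hm.
  apply: (inv_sep _ _ he inv); lia.
have [hB|hB] := leqP (3 * #|B|) (2 * #|T|); first exact: (inv_sep _ _ he inv).
destruct (classic (exists S : {set T}, separator e (2 * eps * #|T|%:R / 3) (2 / 3) S)) as [h|hn]; first done.
exfalso.
case: inv => [dAB nE hS hA].
pose e' := [rel x y | [&& e x y, x \in B & y \in B]].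
apply: (H B e').
- split; first split.
  + by move=> x y /=; rewrite sym; case: (x \in B); case: (y \in B); rewrite ?andbF ?andbT.
  + by move=> x /=; rewrite irr.
  + by move=> x y /= /and3P[].
- have : (#|A| + #|B| <= #|T|)%N.
    by rewrite -cardsUI (disjoint_setI0 dAB) cards0 addn0 max_card.
  lia.
move=> U sUB hU; rewrite leNgt; apply/negP => hlt.
set N := nbhd B e' U in hlt.
apply: hn; apply: (IH (A :|: U) (B :\: (U :|: N))).
- have dAU : [disjoint A & U].
    exact: disjointWr sUB dAB.
  have cAU : #|A :|: U| = (#|A| + #|U|)%N.
    by rewrite -cardsUI (disjoint_setI0 dAU) cards0 addn0.
  split.
  + rewrite disjoints_subset; apply/subsetP => x; rewrite !inE => /orP[xA|xU].
      by rewrite (disjointFr dAB xA) andbF.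
    by rewrite xU.
  + move=> x y; rewrite !inE => /orP[xA|xU] /andP[yUN yB].
      exact: nE.
    apply/negP => exy; move: yUN; rewrite negb_or => /andP[yU yN].
    move/negP: yN; apply; rewrite /N /nbhd yU yB /=.
    apply/existsP; exists x; rewrite xU /= exy yB andbT.
    by move/subsetP: sUB => /(_ x xU).
  + have sub : ~: (A :|: U :|: B :\: (U :|: N)) \subset ~: (A :|: B) :|: N.
      apply/subsetP => z.
      case: (boolP (z \in N)) => zN; first by by rewrite in_setU zN orbT.
      rewrite !in_setU !in_setC !in_setU in_setD !in_setU (negbTE zN) orbF !negb_or => /andP[/andP[zA zU]].
      by rewrite zU zA /= => zB; rewrite zB.
    have c1 := subset_leq_card sub.
    have c2 := cardsUI (~: (A :|: B)) N.
    have c3 : (#|~: (A :|: U :|: B :\: (U :|: N))| <= #|~: (A :|: B)| + #|N|)%N by lia.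
    move: c3; rewrite -(ler_nat R) natrD cAU natrD => c3.
    have hU0 : 0 <= (#|N|%:R : R) by [].
    nra.
  + have : (#|A| + #|B| <= #|T|)%N.
      by rewrite -cardsUI (disjoint_setI0 dAB) cards0 addn0 max_card.
    rewrite cAU; lia.
- have c1 := cardsID (U :|: N) B.
  have c2 : (#|U| <= #|B :&: (U :|: N)|)%N.
    apply: subset_leq_card; rewrite subsetI sUB; exact: subsetUl.
  have c3 : (0 < #|U|)%N.
    rewrite lt0n; apply/negP => /eqP h0; move: hlt; rewrite h0 mulr0.
    by rewrite ltNge ler0n.
  lia.
Qed.
End S.

Theorem lemma11 (R : realFieldType) (eps : R) (T : finType) (e : rel T) :
  0 < eps ->
  simple_graph e ->
  (forall (V' : {set T}) (e' : rel T), subgraph e V' e' ->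
     (#|T| <= 2 * #|V'|)%N -> ~ expander eps V' e') ->
  exists S : {set T}, separator e (2 * eps * #|T|%:R / 3) (2 / 3) S.
Proof.
move=> he sg H.
apply: (@main_ind R eps T e H he sg #|T| set0 setT); last first.
  by rewrite cardsT.
split.
- by rewrite disjoints_subset sub0set.
- by move=> x y; rewrite inE.
- by rewrite set0U setCT cards0 mulr0.
- by rewrite cards0.
Qed.
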